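(* Let $\mathcal R_5=\{(wx,x):w\in\{0,1\}^*,\ x\in\{0,1\}\}\subseteq\{0,1\}^*\times\{0,1\}^*$. Then $\mathcal R_5$ cannot be computed by a quantum finite state transducer with an isolated cutpoint, while it is computed by a deterministic finite state transducer.
   Context: A probabilistic finite state transducer (pfst) is a tuple $T=(Q,\Sigma_1,\Sigma_2,V,f,q_0,Q_{\rm acc},Q_{\rm rej})$ with finite state set $Q$, finite input/output alphabets $\Sigma_1,\Sigma_2$, initial state $q_0$, disjoint accepting/rejecting sets $Q_{\rm acc},Q_{\rm rej}\subseteq Q$ (the other states are non-halting). For each $a\in\Sigma_1\cup\{\ddagger,\$\}$ ($\ddagger,\$$ are end markers) there is a stochastic $Q\times Q$ matrix $V_a$ and an output function $f_a:Q\to\Sigma_2^*$; $V_\$$ puts all probability on halting states. On input $v$ the machine reads $\ddagger v\$$; in state $q$ reading $a$ it appends $f_a(q)$ to the output tape and moves to state $p$ with probability $(V_a)_{qp}$; if $p$ is accepting (rejecting) it halts and accepts with the current output (rejects). $T(w|v)$ is the probability of accepting with output $w$ on input $v$. A deterministic finite state transducer (dfst) is a pfst all of whose matrix entries are $0$ or $1$; it computes $\mathcal R$ if $T(w|v)=1$ for $(v,w)\in\mathcal R$ and $T(w|v)=0$ otherwise. A quantum finite state transducer (qfst) has the same data except that each $V_a$ is a unitary on $\ell^2(Q)$ (and $V_\$$ maps the span of non-halting states into the span of halting states). Its non-halting part is a vector $\psi=\sum_{q,w}\alpha_{qw}|q\rangle\otimes|w\rangle\in\ell^2(Q\times\Sigma_2^*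 )$, initially $|q_0\rangle\otimes|\epsilon\rangle$; reading $a$ maps it to $\psi'=\sum_{q,w}\alpha_{qw}V_a|q\rangle\otimes|wf_a(q)\rangle$ with $V_a|q\rangle=\sum_p(V_a)_{qp}|p\rangle$, after which the squared norm of the component of $\psi'$ on $\mathrm{span}(Q_{\rm acc})\otimes|x\rangle$ is added to the probability of accepting with output $x$, the squared norm of the component on $\mathrm{span}(Q_{\rm rej})\otimes\ell^2(\Sigma_2^* )$ to the rejection probability, and the computation continues with the projection onto non-halting states. $T(w|v)$ is defined analogously. $T$ computes $\mathcal R$ with isolated cutpoint if there are $0<\alpha<1$ and $\varepsilon>0$ such that for all $v,w$: $(v,w)\in\mathcal R\Rightarrow T(w|v)\ge\alpha+\varepsilon$ and $(v,w)\notin\mathcal R\Rightarrow T(w|v)\le\alpha-\varepsilon$. *)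

(* Defs.v *)
From HB Require Import structures.
From mathcomp Require Import all_boot all_order all_algebra.
From mathcomp Require Import complex.
From mathcomp Require Import reals.
Set Implicit Arguments. Unset Strict Implicit. Unset Printing Implicit Defensive.
Import Order.TTheory GRing.Theory Num.Theory.
Local Open Scope ring_scope.

(* Tape symbols: input letters of Sigma_1 = {0,1} (= bool), plus the end
   markers "double dagger" (left) and "$" (right). *)
Inductive tsym : Type := TLetter of bool | TLeft | TRight.

Definition tape (v : seq bool) : seq tsym := TLeft :: rcons (map TLetter v) TRight.

(* Reading a symbol with matrix V and output function f, the configuration
   sum_{q,w} psi(q,w) |q> (x) |w> is mapped to
   sum_{q,w} psi(q,w) V|q> (x) |w f(q)>, V|q> = sum_p V_{qp} |p>. *)
Definition evolve (K : pzRingType) (n : nat) (V : 'M[K]_n) (f : 'I_n -> seq bool)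
  (psi : 'I_n -> seq bool -> K) : 'I_n -> seq bool -> K :=
  fun p y => \sum_(q < n)
     (if (size (f q) <= size y)%N && (drop (size y - size (f q)) y == f q)
      then psi q (take (size y - size (f q)) y) * V q p else 0).

Definition project (K : pzRingType) (n : nat) (halt : {set 'I_n})
  (psi : 'I_n -> seq bool -> K) : 'I_n -> seq bool -> K :=
  fun p y => if p \in halt then 0 else psi p y.

(* Acceptance weight with output x of a configuration vector, given a
   "weight" function turning a coefficient into a probability contribution
   (squared modulus in the quantum case, identity in the probabilistic one). *)
Definition acc_weight (K : pzRingType) (R : pzRingType) (wt : K -> R) (n : nat)
  (acc : {set 'I_n}) (psi : 'I_n -> seq bool -> K) (x : seq bool) : R :=
  \sum_(q < n | q \in acc) wt (psi q x).

Fixpoint run_acc (K : pzRingType) (R : pzRingType) (wt : K -> R) (n : nat)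
  (V : tsym -> 'M[K]_n) (f : tsym -> 'I_n -> seq bool)
  (acc halt : {set 'I_n}) (x : seq bool)
  (psi : 'I_n -> seq bool -> K) (s : seq tsym) : R :=
  match s with
  | [::] => 0
  | a :: s' =>
      let psi' := evolve (V a) (f a) psi in
      acc_weight wt acc psi' x + run_acc wt V f acc halt x (project halt psi') s'
  end.

Definition init (K : pzRingType) (n : nat) (q0 : 'I_n) : 'I_n -> seq bool -> K :=
  fun q w => if (q == q0) && (w == [::]) then 1 else 0.
Arguments init {K n} q0.

Section QFST.
Variable R : realType.
Local Notation C := R[i].

Definition conjT n (A : 'M[C]_n) : 'M[C]_n := (map_mx (@conjc R) A)^T.
Definition unitary n (A : 'M[C]_n) : Prop := A *m conjT A = 1%:M.

Definition sqmod (z : C) : R := (@complex.Re R z) ^+ 2 + (@complex.Im R z) ^+ 2.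

Record qfst : Type := QFST {
  q_n : nat;
  q_V : tsym -> 'M[C]_q_n;
  q_f : tsym -> 'I_q_n -> seq bool;
  q_q0 : 'I_q_n;
  q_acc : {set 'I_q_n};
  q_rej : {set 'I_q_n};
  q_disj : [disjoint q_acc & q_rej];
  q_unitary : forall a, unitary (q_V a);
  q_end : forall q p : 'I_q_n, q \notin q_acc :|: q_rej ->
            p \notin q_acc :|: q_rej -> q_V TRight q p = 0
}.

Definition qprob (T : qfst) (v w : seq bool) : R :=
  run_acc sqmod (q_V T) (@q_f T) (q_acc T) (q_acc T :|: q_rej T) w
          (init (q_q0 T)) (tape v).
End QFST.

Section PFST.
Variable R : realType.

Definition stochastic n (A : 'M[R]_n) : Prop :=
  (forall q p, 0 <= A q p) /\ (forall q, \sum_(p < n) A q p = 1).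

Record pfst : Type := PFST {
  p_n : nat;
  p_V : tsym -> 'M[R]_p_n;
  p_f : tsym -> 'I_p_n -> seq bool;
  p_q0 : 'I_p_n;
  p_acc : {set 'I_p_n};
  p_rej : {set 'I_p_n};
  p_disj : [disjoint p_acc & p_rej];
  p_stoch : forall a, stochastic (p_V a);
  p_end : forall q p : 'I_p_n, p \notin p_acc :|: p_rej -> p_V TRight q p = 0
}.

Definition pprob (T : pfst) (v w : seq bool) : R :=
  run_acc id (p_V T) (@p_f T) (p_acc T) (p_acc T :|: p_rej T) w
          (init (p_q0 T)) (tape v).

Definition is_dfst (T : pfst) : Prop :=
  forall a q p, p_V T a q p = 0 \/ p_V T a q p = 1.

Definition dfst_computes (T : pfst) (Rel : seq bool -> seq bool -> Prop) : Prop :=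
  forall v w, (Rel v w -> pprob T v w = 1) /\ (~ Rel v w -> pprob T v w = 0).
End PFST.

Definition qfst_computes_isolated (R : realType) (T : qfst R)
  (Rel : seq bool -> seq bool -> Prop) : Prop :=
  exists alpha eps : R, [/\ 0 < alpha, alpha < 1, 0 < eps &
    forall v w, (Rel v w -> alpha + eps <= qprob T v w) /\
                (~ Rel v w -> qprob T v w <= alpha - eps)].

Definition R5 (v o : seq bool) : Prop :=
  exists (w : seq bool) (x : bool), v = rcons w x /\ o = [:: x].

(* Main.v *)
Require Import Defs.
From HB Require Import structures.
From mathcomp Require Import all_boot all_order all_algebra.
From mathcomp Require Import complex reals.
From mathcomp Require Import ring lra.
From Stdlib Require Import FunctionalExtensionality Classical.
Set Implicit Arguments. Unset Strict Implicit. Unset Printing Implicit Defensive.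
Import Order.TTheory GRing.Theory Num.Theory.
Local Open Scope ring_scope.
Local Open Scope complex_scope.

Section Q.
Variable R : realType.
Local Notation C := R[i].

Lemma sqmodC (z : C) : (sqmod z)%:C = z * (z^*)%C.
Proof. case: z => a b; rewrite /sqmod /=. simpc. apply/eqP; rewrite eq_complex /=; apply/andP; split; apply/eqP; ring. Qed.

Lemma sqmod_ge0 (z : C) : 0 <= sqmod z.
Proof. by rewrite /sqmod addr_ge0 // sqr_ge0. Qed.

Section Gen.
Variables (n : nat) (V : 'M[C]_n) (f : 'I_n -> seq bool).
Hypothesis HV : unitary V.

Lemma unit_sum (c : 'I_n -> C) :
  \sum_p sqmod (\sum_q c q * V q p) = \sum_q sqmod (c q).
Proof.
apply: (@complexI R). rewrite !rmorph_sum /=.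
under eq_bigr do rewrite sqmodC.
under [RHS]eq_bigr do rewrite sqmodC.
transitivity (\sum_(p < n) \sum_(q < n) \sum_(r < n) c q * V q p * ((c r)^* * (V r p)^*)).
  apply eq_bigr => p _. rewrite rmorph_sum /= mulr_suml; apply eq_bigr => q _.
  rewrite mulr_sumr; apply eq_bigr => r _; by rewrite rmorphM.
rewrite exchange_big /=. apply eq_bigr => q _. rewrite exchange_big /=.
have HH r : \sum_(p < n) c q * V q p * ((c r)^* * (V r p)^*) = c q * (c r)^* * (V *m conjT V) q r.
  rewrite mxE mulr_sumr; apply eq_bigr=> p _; rewrite /conjT !mxE; ring.
rewrite (bigD1 q) //= HH HV mxE eqxx mulr1 big1 ?addr0 //.
by move=> r rq; rewrite HH HV mxE eq_sym (negbTE rq) mulr0.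
Qed.

Definition cfg := 'I_n -> seq bool -> C.
Definition N3 (x : cfg) q := sqmod (x q [::]) + sqmod (x q [:: false]) + sqmod (x q [:: true]).
Definition Nn (x : cfg) := \sum_q N3 x q.

Lemma sqmod0 : sqmod (0 : C) = 0.
Proof. by rewrite /sqmod /= expr0n /= addr0. Qed.

Lemma N3_ge0 x q : 0 <= N3 x q.
Proof. by rewrite /N3; apply: addr_ge0; [apply: addr_ge0|]; apply: sqmod_ge0. Qed.

Lemma Nn_ge0 x : 0 <= Nn x.
Proof. by apply: sumr_ge0 => q _; apply: N3_ge0. Qed.

Lemma sum3 (F G H : 'I_n -> R) : \sum_i (F i + G i + H i) = \sum_i F i + \sum_i G i + \sum_i H i.
Proof. by rewrite !big_split. Qed.

Lemma evolve_N psi : Nn (evolve V f psi) <= Nn psi.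
Proof.
rewrite /Nn /N3 /evolve.
set cc := fun q (y : seq bool) => if (size (f q) <= size y)%N && (drop (size y - size (f q)) y == f q) then psi q (take (size y - size (f q)) y) else 0.
rewrite (eq_bigr (fun p => sqmod (\sum_q cc q [::] * V q p) + sqmod (\sum_q cc q [::false] * V q p) + sqmod (\sum_q cc q [::true] * V q p))); last first.
  move=> p _; rewrite /cc; congr (_ + _ + _); congr sqmod; apply eq_bigr => q _; by case: ifP; rewrite ?mul0r.
rewrite !sum3 !unit_sum -!sum3. apply ler_sum => q _.
rewrite /cc; case: (f q) => [|b [|b' l]] /=.
- by [].
- case: b => /=; rewrite ?sqmod0; have := sqmod_ge0 (psi q [::]); have := sqmod_ge0 (psi q [::true]);  have := sqmod_ge0 (psi q [::false]); lra.
- rewrite !sqmod0; have := sqmod_ge0 (psi q [::]); have := sqmod_ge0 (psi q [::true]);  have := sqmod_ge0 (psi q [::false]); lra.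
Qed.

Definition cadd (x y : cfg) : cfg := fun p w => x p w + y p w.
Definition csub (x y : cfg) : cfg := fun p w => x p w - y p w.

Lemma evolve_add x y : evolve V f (cadd x y) = cadd (evolve V f x) (evolve V f y).
Proof.
apply: functional_extensionality => p; apply: functional_extensionality => w.
rewrite /evolve /cadd -big_split /=; apply eq_bigr => q _; case: ifP => _; by rewrite ?addr0 ?mulrDl.
Qed.

Lemma evolve_sub x y : evolve V f (csub x y) = csub (evolve V f x) (evolve V f y).
Proof.
apply: functional_extensionality => p; apply: functional_extensionality => w.
rewrite /evolve /csub -sumrB /=; apply eq_bigr => q _; case: ifP => _; by rewrite ?subr0 ?mulrBl.
Qed.

Variable halt : {set 'I_n}.

Lemma project_add x y : project halt (cadd x y) = cadd (project halt x) (project halt y).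
Proof.
apply: functional_extensionality => p; apply: functional_extensionality => w.
by rewrite /project /cadd; case: ifP => _; rewrite ?addr0.
Qed.

Lemma project_sub x y : project halt (csub x y) = csub (project halt x) (project halt y).
Proof.
apply: functional_extensionality => p; apply: functional_extensionality => w.
by rewrite /project /csub; case: ifP => _; rewrite ?subr0.
Qed.

Lemma project_N x : Nn (project halt x) <= Nn x.
Proof.
apply: ler_sum => q _; rewrite /N3 /project; case: ifP => _; rewrite ?sqmod0 //.
rewrite !addr0; exact: N3_ge0.
Qed.

Lemma sqmod_par (a b : C) : sqmod (a - b) + sqmod (a + b) = 2 * sqmod a + 2 * sqmod b.
Proof. case: a => a1 a2; case: b => b1 b2; rewrite /sqmod /=; ring. Qed.

Lemma Nn_par x y : Nn (csub x y) + Nn (cadd x y) = 2 * Nn x + 2 * Nn y.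
Proof.
rewrite /Nn -big_split /= !mulr_sumr -big_split /=; apply eq_bigr => q _.
rewrite /N3 /csub /cadd.
have := sqmod_par (x q [::]) (y q [::]); have := sqmod_par (x q [::false]) (y q [::false]);
have := sqmod_par (x q [::true]) (y q [::true]); lra.
Qed.
End Gen.

Section Dyn.
Variables (n : nat) (V : 'M[C]_n) (f : 'I_n -> seq bool) (halt : {set 'I_n}).
Hypothesis HV : unitary V.
Local Notation cfg := (cfg n).
Local Notation Nn := (@Nn n).
Definition A (x : cfg) : cfg := project halt (evolve V f x).
Definition dd (x : cfg) := Nn x - Nn (A x).

Lemma A_N x : Nn (A x) <= Nn x.
Proof. exact: le_trans (project_N _ _) (evolve_N f HV x). Qed.

Lemma dd_ge0 x : 0 <= dd x.
Proof. by rewrite /dd subr_ge0 A_N. Qed.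

Lemma A_sub x y : A (csub x y) = csub (A x) (A y).
Proof. by rewrite /A evolve_sub project_sub. Qed.
Lemma A_add x y : A (cadd x y) = cadd (A x) (A y).
Proof. by rewrite /A evolve_add project_add. Qed.

Lemma dd_sub x y : dd (csub x y) <= 2 * dd x + 2 * dd y.
Proof.
have h1 := Nn_par x y. have h2 := Nn_par (A x) (A y).
have h3 := dd_ge0 (cadd x y).
move: h3; rewrite /dd A_sub A_add; lra.
Qed.

Lemma iter_sub k x y : iter k A (csub x y) = csub (iter k A x) (iter k A y).
Proof. by elim: k => //= k ->; rewrite A_sub. Qed.

Lemma iter_N k x : Nn (iter k A x) <= Nn x.
Proof. elim: k => //= k IH; exact: le_trans (A_N _) IH. Qed.

Lemma tele k x : Nn x - Nn (iter k A x) = \sum_(j < k) dd (iter j A x).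
Proof.
elim: k => [|k IH]; first by rewrite big_ord0 /= subrr.
by rewrite big_ord_recr /= -IH /dd; lra.
Qed.

End Dyn.

Section Pigeon.
Variable n : nat.
Local Notation cfg := (cfg n).
Local Notation Nn := (@Nn n).

Definition Ys : seq (seq bool) := [:: [::]; [:: false]; [:: true]].
Definition coord (x : cfg) (t : 'I_n * 'I_3 * bool) : R :=
  let: (q, i, b) := t in if b then complex.Re (x q (nth [::] Ys i)) else complex.Im (x q (nth [::] Ys i)).

Lemma N3_le x q : N3 x q <= Nn x.
Proof.
rewrite /Nn (bigD1 q) //= lerDl; apply: sumr_ge0 => r _; exact: N3_ge0.
Qed.

Lemma coord_bound x t : Nn x <= 1 -> -1 <= coord x t <= 1.
Proof.
case: t => [[q i] b] H.
have H3 := le_trans (N3_le x q) H.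
have : sqmod (x q (nth [::] Ys i)) <= 1.
  move: H3; rewrite /N3.
  have := sqmod_ge0 (x q [::]); have := sqmod_ge0 (x q [::true]); have := sqmod_ge0 (x q [::false]).
  case: i => [[|[|[|i]]] Hi] //= *; lra.
rewrite /sqmod /coord; set z := x q _; case: z => a c /= h.
case: b => /=; apply/andP; split; nra.
Qed.

Definition bin (M : nat) (c : R) : 'I_(M.*2).+1 := inord (@Num.truncn R ((c + 1) * M%:R)).

Lemma bin_ok M (c : R) : -1 <= c <= 1 -> (Num.truncn ((c + 1) * M%:R)%R < (M.*2).+1)%N.
Proof.
move=> /andP[c1 c2]; rewrite ltnS -(ler_nat R).
have h0 : 0 <= (c + 1) * M%:R by apply: mulr_ge0 => //; lra.
apply: le_trans (_ : (c + 1) * M%:R <= _); first by rewrite truncn_le.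
rewrite -muln2 natrM; have : 0 <= M%:R :> R by []. nra.
Qed.

Lemma bin_close M (c c' : R) : -1 <= c <= 1 -> -1 <= c' <= 1 -> bin M c = bin M c' ->
  ((c - c') * M%:R)^+2 <= 1.
Proof.
move=> hc hc' /(congr1 (@nat_of_ord _)); rewrite /bin !inordK ?bin_ok // => E.
have M0 : 0 <= M%:R :> R by [].
move: hc hc' => /andP[c1 c2] /andP[c1' c2'].
have h0 : 0 <= (c + 1) * M%:R by apply: mulr_ge0 => //; lra.
have h0' : 0 <= (c' + 1) * M%:R by apply: mulr_ge0 => //; lra.
have := truncn_itv h0; have := truncn_itv h0'; rewrite E -!natr1.
set t := (Num.truncn _)%:R => /andP[a1 a2] /andP[b1 b2].
nra.
Qed.

Lemma pigeon (g : nat -> cfg) (eta : R) : 0 < eta -> (forall k, Nn (g k) <= 1) ->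
  exists k l, (k < l)%N /\ Nn (csub (g k) (g l)) <= eta.
Proof.
move=> eta0 gb.
set M := (Num.truncn (6 * n%:R / eta)).+1.
pose key := fun k : nat => [ffun t => bin M (coord (g k) t)].
have [i [j [ne E]]] : exists i j : 'I_(#|{ffun 'I_n * 'I_3 * bool -> 'I_(M.*2).+1}|.+1),
    i != j /\ key i = key j.
  apply: NNPP => H.
  have inj : injective (fun i : 'I_(#|{ffun 'I_n * 'I_3 * bool -> 'I_(M.*2).+1}|.+1) => key i).
    move=> i j E; apply: NNPP => ne; apply: H; exists i, j; split => //; exact/eqP.
  by have := leq_card _ inj; rewrite card_ord ltnn.
have close : forall t, ((coord (g i) t - coord (g j) t) * M%:R)^+2 <= 1.
  move=> t; apply: bin_close; try exact: coord_bound.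
  by move/ffunP/(_ t): E; rewrite !ffunE.
have Mpos : 1 <= M%:R :> R by rewrite ler1n.
have Meta : 6 * n%:R < eta * M%:R.
  have h : 0 <= 6 * n%:R / eta by apply: divr_ge0 => //; [apply: mulr_ge0 | apply: ltW].
  have := truncn_itv h => /andP[_ h2].
  by rewrite [eta * _]mulrC -ltr_pdivrMr.
have bound : forall k l, (forall t, ((coord (g k) t - coord (g l) t) * M%:R)^+2 <= 1) ->
    Nn (csub (g k) (g l)) <= eta.
  move=> k l cl.
  have M2 : 0 < M%:R ^+ 2 :> R by rewrite exprn_gt0 // ltr0n.
  rewrite -(ler_pM2r M2).
  apply: le_trans (_ : 6 * n%:R <= _).
    2:{ have h1 : 0 <= eta * M%:R * (M%:R - 1).
          by apply: mulr_ge0; [apply: mulr_ge0; [apply: ltW|] |]; lra.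
        rewrite expr2; nra. }
  rewrite /Nn mulr_suml.
  apply: le_trans (_ : \sum_(q < n) (6 : R) <= _); last by rewrite sumr_const card_ord mulr_natr.
  apply: ler_sum => q _.
  have e1 := cl (q, @Ordinal 3 0 isT, true); have e2 := cl (q, @Ordinal 3 0 isT, false).
  have e3 := cl (q, @Ordinal 3 1 isT, true); have e4 := cl (q, @Ordinal 3 1 isT, false).
  have e5 := cl (q, @Ordinal 3 2 isT, true); have e6 := cl (q, @Ordinal 3 2 isT, false).
  move: e1 e2 e3 e4 e5 e6; rewrite /coord /N3 /csub /sqmod /=.
  case: (g k q [::]) => a1 b1; case: (g l q [::]) => a2 b2.
  case: (g k q [::false]) => a3 b3; case: (g l q [::false]) => a4 b4.
  case: (g k q [::true]) => a5 b5; case: (g l q [::true]) => a6 b6 /=.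
  rewrite !exprMn !mulrDl; lra.
case: (ltngtP i j) => [lt|gt|eq].
- by exists i, j; split => //; apply: bound.
- exists j, i; split => //; apply: bound => t.
  by have := close t; rewrite -opprB mulNr sqrrN.
- by move: ne; rewrite (val_inj eq) eqxx.
Qed.
End Pigeon.

Section Dyn2.
Variables (n : nat) (V : 'M[C]_n) (f : 'I_n -> seq bool) (halt : {set 'I_n}).
Hypothesis HV : unitary V.
Local Notation Nn := (@Nn n).
Local Notation A := (A V f halt).

Lemma close_return (phi : cfg n) (del eta : R) : 0 < eta -> Nn phi <= 1 ->
  (forall j, Nn phi - del <= Nn (iter j A phi)) ->
  exists m, (0 < m)%N /\ Nn (csub phi (iter m A phi)) <= eta + 4 * del.
Proof.
move=> eta0 Hphi Hj.
have [k [l [kl Hkl]]] := @pigeon n (fun k => iter k A phi) eta eta0 (fun k => le_trans (iter_N f halt HV k phi) Hphi).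
exists (l - k)%N; split; first by rewrite subn_gt0.
set m := (l - k)%N. set z := csub phi (iter m A phi).
have El : iter k A (iter m A phi) = iter l A phi by rewrite -iterD /m subnKC // ltnW.
have Hz : iter k A z = csub (iter k A phi) (iter l A phi) by rewrite iter_sub El.
have T := tele V f halt k z. rewrite Hz in T.
have S : \sum_(j<k) dd V f halt (iter j A z) <= \sum_(j<k) (2 * dd V f halt (iter j A phi) + 2 * dd V f halt (iter j A (iter m A phi))).
  apply ler_sum => j _; rewrite /z iter_sub; exact: (dd_sub f halt HV).
rewrite -T [X in _ <= X]big_split /= -!mulr_sumr -!tele El in S.
have := Hj k; have := Hj l; have := iter_N f halt HV m phi. lra.
Qed.
End Dyn2.

Lemma run_acc_cat (K R' : pzRingType) (wt : K -> R') n (V : tsym -> 'M[K]_n) f acc halt x psi s1 s2 :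
  run_acc wt V f acc halt x psi (s1 ++ s2) =
  run_acc wt V f acc halt x psi s1 +
  run_acc wt V f acc halt x (foldl (fun psi a => project halt (evolve (V a) (f a) psi)) psi s1) s2.
Proof.
elim: s1 psi => [|a s1 IH] psi /=; first by rewrite add0r.
by rewrite IH addrA.
Qed.

Lemma acc_weight_ge0 n (acc : {set 'I_n}) (psi : cfg n) x : 0 <= acc_weight (@sqmod R) acc psi x.
Proof. by apply: sumr_ge0 => q _; exact: sqmod_ge0. Qed.

Lemma run_acc_ge0 n (V : tsym -> 'M[C]_n) f acc halt x psi s :
  0 <= run_acc (@sqmod R) V f acc halt x psi s.
Proof.
elim: s psi => [|a s IH] psi //=; apply: addr_ge0 => //; exact: acc_weight_ge0.
Qed.

Lemma acc_weight_N n (acc : {set 'I_n}) (psi : cfg n) : acc_weight (@sqmod R) acc psi [::true] <= Nn psi.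
Proof.
rewrite /acc_weight big_mkcond /=; apply: ler_sum => q _.
have := sqmod_ge0 (psi q [::]); have := sqmod_ge0 (psi q [::true]); have := sqmod_ge0 (psi q [::false]).
rewrite /N3; case: ifP => _ *; lra.
Qed.

Lemma sqmod_addle (a b : C) (t : R) : 0 < t ->
  sqmod (a + b) <= (1 + t) * sqmod a + (1 + t^-1) * sqmod b.
Proof.
move=> t0.
have st : t * t^-1 = 1 by rewrite mulfV // gt_eqF.
have s0 : 0 < t^-1 by rewrite invr_gt0.
case: a => a1 a2; case: b => b1 b2; rewrite /sqmod /=.
have h1 := mulr_ge0 (ltW s0) (sqr_ge0 (t * a1 - b1)).
have h2 := mulr_ge0 (ltW s0) (sqr_ge0 (t * a2 - b2)).
have e1 : t^-1 * (t * a1 - b1) ^+ 2 = t * a1^+2 - 2 * a1 * b1 + t^-1 * b1^+2.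
  by rewrite !expr2; field; rewrite gt_eqF.
have e2 : t^-1 * (t * a2 - b2) ^+ 2 = t * a2^+2 - 2 * a2 * b2 + t^-1 * b2^+2.
  by rewrite !expr2; field; rewrite gt_eqF.
rewrite e1 in h1; rewrite e2 in h2.
rewrite !expr2 in h1 h2 *. nra.
Qed.

Section QF.
Variable T : qfst R.
Local Notation n := (q_n T).
Definition hl := q_acc T :|: q_rej T.
Definition stp a (psi : cfg n) : cfg n := project hl (evolve (q_V T a) (@q_f R T a) psi).
Definition Phi (v : seq bool) : cfg n := foldl (fun psi a => stp a psi) (init (q_q0 T)) (TLeft :: map TLetter v).
Definition accF (psi : cfg n) : R := acc_weight (@sqmod R) (q_acc T) (evolve (q_V T TRight) (@q_f R T TRight) psi) [::true].
Definition pre (v : seq bool) : R := run_acc (@sqmod R) (q_V T) (@q_f R T) (q_acc T) hl [::true] (init (q_q0 T)) (TLeft :: map TLetter v).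

Lemma qprob_dec v : qprob T v [::true] = pre v + accF (Phi v).
Proof.
rewrite /qprob /tape -cats1 -cat_cons run_acc_cat /= addr0 //.
Qed.

Lemma pre_cat u s : pre u <= pre (u ++ s).
Proof.
rewrite /pre map_cat -cat_cons run_acc_cat lerDl; exact: run_acc_ge0.
Qed.

Lemma Phi_cat u s : Phi (u ++ s) = foldl (fun psi a => stp a psi) (Phi u) (map TLetter s).
Proof. by rewrite /Phi map_cat -cat_cons foldl_cat. Qed.

Lemma stp_N a psi : Nn (stp a psi) <= Nn psi.
Proof. exact: (A_N _ _ (q_unitary T a)). Qed.

Lemma foldl_N (psi : cfg n) s : Nn (foldl (fun psi a => stp a psi) psi s) <= Nn psi.
Proof. elim: s psi => [|a s IH] psi //=; exact: le_trans (IH _) (stp_N _ _). Qed.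

Lemma sqmod1 : sqmod (1 : C) = 1.
Proof. by rewrite /sqmod /= expr0n /= addr0 expr1n. Qed.

Lemma init_N : Nn (init (q_q0 T) : cfg n) <= 1.
Proof.
rewrite /Nn /N3 /init (bigD1 (q_q0 T)) //= eqxx /= sqmod1 !sqmod0 big1 ?addr0 //.
by move=> q /negbTE ->; rewrite /= !sqmod0 !addr0.
Qed.

Lemma Phi_N v : Nn (Phi v) <= 1.
Proof. exact: le_trans (foldl_N _ _) init_N. Qed.

Lemma foldl_nseq (psi : cfg n) a m : foldl (fun psi a => stp a psi) psi (nseq m a) = iter m (stp a) psi.
Proof. by elim: m psi => [|m IH] psi //; rewrite [LHS]/= IH -iterSr. Qed.

Lemma accF_cont (x y : cfg n) (t : R) : 0 < t -> Nn y <= 1 ->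
  accF x <= accF y + t + (1 + t^-1) * Nn (csub x y).
Proof.
move=> t0 Hy.
have Ex : x = cadd y (csub x y).
  apply: functional_extensionality => p; apply: functional_extensionality => w.
  by rewrite /cadd /csub addrC subrK.
have H1 : accF x <= (1 + t) * accF y + (1 + t^-1) * accF (csub x y).
  rewrite {1}Ex /accF evolve_add /acc_weight !mulr_sumr -big_split /=.
  apply: ler_sum => q _; exact: sqmod_addle.
have H2 : accF y <= 1.
  exact: le_trans (acc_weight_N _ _) (le_trans (evolve_N _ (q_unitary T _) _) Hy).
have H3 : accF (csub x y) <= Nn (csub x y).
  exact: le_trans (acc_weight_N _ _) (evolve_N _ (q_unitary T _) _).
have H4 : 0 <= accF y by exact: acc_weight_ge0.
have s0 : 0 < 1 + t^-1 by rewrite addr_gt0 // invr_gt0.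
nra.
Qed.

End QF.

Lemma nseqS_rcons (m : nat) (b : bool) : nseq m.+1 b = rcons (nseq m b) b.
Proof. by elim: m => //= m ->. Qed.

Lemma no_qfst : ~ exists T : qfst R, qfst_computes_isolated T R5.
Proof.
move=> [T [al [eps [al0 al1 eps0 H]]]].
set t := eps / 2. set K := 1 + t^-1.
have t0 : 0 < t by rewrite divr_gt0.
have K0 : 0 < K by rewrite addr_gt0 // invr_gt0.
set del := eps / (10 * K).
have del0 : 0 < del by rewrite divr_gt0 // mulr_gt0.
have Edel : K * (del + 4 * del) = eps / 2.
  rewrite /del; field. by rewrite gt_eqF.
have [s Hs] : exists s, forall u, Nn (Phi (T:=T) s) - del <= Nn (Phi (T:=T) (s ++ u)).
  apply: NNPP => Hn.
  have Hd : forall s, exists u, Nn (Phi (T:=T) (s ++ u)) < Nn (Phi (T:=T) s) - del.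
    move=> s; apply: NNPP => Hn2; apply: Hn; exists s => u; rewrite leNgt; apply/negP => Hlt; apply: Hn2; by exists u.
  have Hk : forall k : nat, exists s, Nn (Phi (T:=T) s) <= 1 - k%:R * del.
    elim => [|k [s' Hs']]; first by exists [::]; rewrite mul0r subr0 Phi_N.
    have [u Hu] := Hd s'. exists (s' ++ u). rewrite -natr1 mulrDl mul1r. lra.
  have [s' Hs'] := Hk (Num.truncn (del^-1)).+1.
  have hi : 0 <= del^-1 by rewrite invr_ge0 ltW.
  have := truncn_itv hi => /andP[_ h2].
  have h3 : 1 < (Num.truncn del^-1).+1%:R * del by rewrite -ltr_pdivrMr // mul1r.
  have := Nn_ge0 (Phi (T:=T) s'). lra.
set phi := Phi (T:=T) (rcons s true).
have Hphi : Nn phi <= Nn (Phi (T:=T) s) by rewrite /phi -cats1 Phi_cat /=; exact: stp_N.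
have Hit : forall j, iter j (stp (T:=T) (TLetter false)) phi = Phi (T:=T) (rcons s true ++ nseq j false).
  by move=> j; rewrite Phi_cat map_nseq foldl_nseq.
have Hj : forall j, Nn phi - del <= Nn (iter j (A (q_V T (TLetter false)) (@q_f R T (TLetter false)) (hl T)) phi).
  move=> j; change (A (q_V T (TLetter false)) (@q_f R T (TLetter false)) (hl T)) with (stp (T:=T) (TLetter false)).
  rewrite Hit -cats1 -catA. have := Hs ([::true] ++ nseq j false). lra.
have [m [m0 Hm]] := close_return (q_unitary T (TLetter false)) del0 (Phi_N T _) Hj.
change (A (q_V T (TLetter false)) (@q_f R T (TLetter false)) (hl T)) with (stp (T:=T) (TLetter false)) in Hm.
rewrite Hit in Hm.
have P1 := (H (rcons s true) [::true]).1 (ex_intro _ s (ex_intro _ true (conj erefl erefl))).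
have NR : ~ R5 (rcons s true ++ nseq m false) [::true].
  case: m m0 {Hm} => // m' _ [w [x [E1 E2]]].
  case: E2 => Ex; subst x.
  move: E1; rewrite nseqS_rcons -rcons_cat => /rcons_inj; by case.
have P2 := (H (rcons s true ++ nseq m false) [::true]).2 NR.
rewrite !qprob_dec in P1 P2.
have Pre := pre_cat T (rcons s true) (nseq m false).
have Cn := accF_cont phi t0 (Phi_N T (rcons s true ++ nseq m false)).
have Hm2 := ler_wpM2l (ltW K0) Hm.
rewrite Edel in Hm2.
have te : t = eps / 2 by [].
rewrite -/phi in P1 Hm2. rewrite -/K in Cn. lra.
Qed.
End Q.

Section D.
Variable R : realType.

Definition nextn (a : tsym) (k : nat) : nat :=
  match a with
  | TLeft => k
  | TLetter b => if (3 <= k)%N then k else (if b then 2 else 1)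
  | TRight => if k == 0%N then 4 else if (k <= 2)%N then 3 else k
  end%N.

Lemma nextn_lt a k : (k < 5)%N -> (nextn a k < 5)%N.
Proof. by case: k => [|[|[|[|[|k]]]]] //= _; case: a => [[]||]. Qed.

Definition nxt a (q : 'I_5) : 'I_5 := inord (nextn a q).
Lemma nxtE a q : nat_of_ord (nxt a q) = nextn a q.
Proof. by rewrite /nxt inordK // nextn_lt. Qed.

Definition Vm (a : tsym) : 'M[R]_5 := \matrix_(q, p) (if nxt a q == p then 1 else 0).
Definition fo (a : tsym) (q : 'I_5) : seq bool :=
  if a is TRight then (if nat_of_ord q == 1%N then [:: false] else if nat_of_ord q == 2%N then [:: true] else [::]) else [::].
Definition accS : {set 'I_5} := [set q : 'I_5 | nat_of_ord q == 3%N].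
Definition rejS : {set 'I_5} := [set q : 'I_5 | nat_of_ord q == 4%N].

Lemma disjS : [disjoint accS & rejS].
Proof. rewrite -setI_eq0; apply/eqP/setP => q; rewrite !inE; by case: eqP => // ->. Qed.

Lemma stochS a : stochastic (Vm a).
Proof.
split=> [q p|q]; first by rewrite mxE; case: ifP.
rewrite (bigD1 (nxt a q)) //= mxE eqxx big1 ?addr0 // => p /negbTE np.
by rewrite mxE eq_sym np.
Qed.

Lemma endS q p : p \notin accS :|: rejS -> Vm TRight q p = 0.
Proof.
move=> hp; rewrite mxE; case: eqP => // E; exfalso; move: hp.
rewrite -E !inE nxtE.
by case: q {E} => [[|[|[|[|[|k]]]]] Hk].
Qed.

Definition TD : pfst R := @PFST R 5 Vm fo ord0 accS rejS disjS stochS endS.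

Lemma TD_dfst : is_dfst TD.
Proof. by move=> a q p /=; rewrite mxE; case: ifP; [right|left]. Qed.


Definition pt (q : 'I_5) (w : seq bool) : 'I_5 -> seq bool -> R :=
  fun p y => if (p == q) && (y == w) then 1 else 0.
Definition z0 : 'I_5 -> seq bool -> R := fun _ _ => 0.
Local Notation H := (accS :|: rejS).

Lemma cond_iff (y w s : seq bool) :
  ((size s <= size y)%N && (drop (size y - size s) y == s)) && (take (size y - size s) y == w)
  = (y == w ++ s).
Proof.
apply/idP/eqP.
  move=> /andP[/andP[_ /eqP d] /eqP t].
  by rewrite -(cat_take_drop (size y - size s) y) d t.
move=> ->; rewrite size_cat addnK leq_addl /=.
by rewrite drop_size_cat // take_size_cat // !eqxx.
Qed.

Lemma evolve_pt a q w : evolve (Vm a) (fo a) (pt q w) = pt (nxt a q) (w ++ fo a q).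
Proof.
apply: functional_extensionality => p; apply: functional_extensionality => y.
rewrite /evolve (bigD1 q) //= big1; last first.
  by move=> q' /negbTE nq; rewrite /pt nq /=; case: ifP; rewrite ?mul0r.
rewrite addr0 /pt eqxx /= mxE -(cond_iff y w (fo a q)) [p == _]eq_sym.
case: (_ <= _)%N; case: (drop _ _ == _); case: (take _ _ == _); case: (nxt a q == p);
  by rewrite /= ?mul1r ?mul0r.
Qed.

Lemma evolve_z0 a : evolve (Vm a) (fo a) z0 = z0.
Proof.
apply: functional_extensionality => p; apply: functional_extensionality => y.
by rewrite /evolve big1 // => q _; case: ifP; rewrite /z0 ?mul0r.
Qed.

Lemma project_z0 : project H z0 = z0.
Proof.
apply: functional_extensionality => p; apply: functional_extensionality => y.
by rewrite /project; case: ifP.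
Qed.

Lemma run_z0 x s : run_acc id Vm fo accS H x z0 s = 0.
Proof.
elim: s => //= a s IH; rewrite evolve_z0 project_z0 IH addr0.
by rewrite /acc_weight big1.
Qed.

Lemma accw_pt q w x : acc_weight id accS (pt q w) x = if (q \in accS) && (x == w) then 1 else 0.
Proof.
rewrite /acc_weight /pt; case: ifP => [/andP[qa xw]|hq].
  rewrite (bigD1 q) //= eqxx xw big1 ?addr0 // => p /andP[_ /negbTE ->] //.
apply: big1 => p pa; case: ifP => // /andP[/eqP pq xw].
by move: hq; rewrite -pq pa xw.
Qed.

Lemma project_pt q w : project H (pt q w) = if q \in H then z0 else pt q w.
Proof.
case: ifP => hq; apply: functional_extensionality => p; apply: functional_extensionality => y;
  rewrite /project /pt /z0.
  by case: (p =P q) => [->|]; rewrite ?hq //=; case: ifP.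
case: ifP => // hp; case: (p =P q) => [E|//]; by rewrite E hq in hp.
Qed.

Definition nL (q : 'I_5) (b : bool) : 'I_5 := nxt (TLetter b) q.

Lemma letters x q v s : (nat_of_ord q < 3)%N ->
  run_acc id Vm fo accS H x (pt q [::]) (map TLetter v ++ s) =
  run_acc id Vm fo accS H x (pt (foldl nL q v) [::]) s.
Proof.
elim: v q => [|b v IH] q hq //=.
have hn : nat_of_ord (nxt (TLetter b) q) = if b then 2%N else 1%N.
  by rewrite nxtE /=; have -> : (2 < q)%N = false by rewrite ltnNge -ltnS hq.
rewrite evolve_pt /= accw_pt project_pt !inE hn.
have -> : ((if b then 2%N else 1%N) == 3%N) = false by case: (b).
have -> : ((if b then 2%N else 1%N) == 4%N) = false by case: (b).
rewrite /= add0r IH //; by rewrite hn; case: (b).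
Qed.

Lemma foldl_lt3 q u : (nat_of_ord q < 3)%N -> (nat_of_ord (foldl nL q u) < 3)%N.
Proof.
elim: u q => [|b u IH] q hq //=; apply: IH.
rewrite /nL nxtE /=; have -> : (2 < q)%N = false by rewrite ltnNge -ltnS hq.
by case: (b).
Qed.

Lemma pprob_TD_pre v x : pprob TD v x =
  acc_weight id accS (evolve (Vm TRight) (fo TRight) (pt (foldl nL ord0 v) [::])) x.
Proof.
rewrite /pprob /tape /=.
have -> : init ord0 = pt ord0 [::] by [].
rewrite evolve_pt accw_pt project_pt.
have e0 : nxt TLeft ord0 = ord0 by apply: val_inj; rewrite /= nxtE.
rewrite e0 !inE /= add0r -cats1 letters //=.
by rewrite addr0.
Qed.

Lemma pprob_nil x : pprob TD [::] x = 0.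
Proof. by rewrite pprob_TD_pre /= evolve_pt accw_pt !inE nxtE. Qed.

Lemma pprob_rcons u b x : pprob TD (rcons u b) x = if x == [:: b] then 1 else 0.
Proof.
rewrite pprob_TD_pre foldl_rcons evolve_pt accw_pt.
have h3 := @foldl_lt3 ord0 u isT.
set qf := foldl nL ord0 u in h3 *.
have hb : nat_of_ord (nL qf b) = if b then 2%N else 1%N.
  by rewrite /nL nxtE /=; have -> : (2 < qf)%N = false by rewrite ltnNge -ltnS h3.
rewrite !inE nxtE hb /= /fo hb.
by case: (b).
Qed.
Lemma TD_computes : dfst_computes TD R5.
Proof.
move=> v w; case/lastP: v => [|u b].
  rewrite pprob_nil; split => // [[w' [x [E _]]]].
  by move/(congr1 size): E; rewrite size_rcons.
rewrite pprob_rcons; split.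
  by move=> [w' [x [E1 E2]]]; case: (rcons_inj E1) => _ ->; rewrite E2 eqxx.
move=> nR; case: eqP => // E; exfalso; apply: nR; by exists u, b.
Qed.
End D.

Theorem theorem10 (R : realType) :
  (~ exists T : qfst R, qfst_computes_isolated T R5) /\
  (exists T : pfst R, is_dfst T /\ dfst_computes T R5).
Proof.
split; first exact: no_qfst.
exists (TD R); split; [exact: TD_dfst | exact: TD_computes].
Qed.
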